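(* Let $M=\mathbb{R}/\mathbb{Z}$ with metric $d_M(x,y)=\inf|\tilde x-\tilde y|$ over representatives, $\pi_M:\mathbb{R}\to M$ the projection and $I_0=\pi_M([\tfrac14,\tfrac34])$. Let $f_0:M\to M$ be a $\mathscr{C}^r$ diffeomorphism ($r\ge1$) with $f_0(x)=\tfrac12x+\tfrac14\bmod1$ on $I_0$. Let $\Omega$ be a set, $\theta:\Omega\to\Omega$ a map, $\kappa:\Omega\to[-1,1]$ a function, $0<\epsilon<\tfrac18$, $f_\omega(x)=f_0(x)+\epsilon\kappa(\omega)\bmod1$, and $f^{(n)}_\omega=f_{\theta^{n-1}\omega}\circ\cdots\circ f_\omega$ ($f^{(0)}_\omega=\mathrm{id}_M$). For $\omega\in\Omega$ let $X_\omega$ be the unique fixed point of $f_\omega|_{I_0}:I_0\to I_0$ (namely $X_\omega=\pi_M(\tfrac12+2\epsilon\kappa(\omega))$). Then for all $n\in\mathbb{N}_0$, $x\in I_0$ and $\omega,\omega'\in\Omega$, $$d_M\bigl(f^{(n)}_\omega(x),X_{\omega'}\bigr)\le\frac1{2^n}+6\epsilon\max_{0\le j\le n-1}\bigl|\kappa(\theta^j\omega)-\kappa(\omega')\bigr|.$$ *)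

(* Defs.v *)
From Stdlib Require Import Reals Lra Lia List.
From Coquelicot Require Import Coquelicot.
Open Scope R_scope.

(* The circle M = R/Z, represented by the canonical representatives in [0,1). *)
Definition M : Type := { x : R | 0 <= x < 1 }.

Lemma frac_in_01 (x : R) : 0 <= x - IZR (Int_part x) < 1.
Proof. destruct (base_Int_part x) as [H1 H2]; lra. Qed.

Definition piM (x : R) : M := exist _ (x - IZR (Int_part x)) (frac_in_01 x).

Definition dM (x y : M) : R :=
  real (Glb_Rbar (fun t => exists k : Z, t = Rabs (proj1_sig x - proj1_sig y + IZR k))).

Definition I0 (x : M) : Prop := 1/4 <= proj1_sig x <= 3/4.

Definition Cr (r : nat) (F : R -> R) : Prop :=
  forall k : nat, (k <= r)%nat -> forall x : R,
    ex_derive_n F k x /\ continuous (Derive_n F k) x.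

(* f : M -> M is a C^r diffeomorphism of the circle: f is bijective and has
   a C^r lift F : R -> R (pi_M (F x) = f (pi_M x)) with nowhere vanishing
   derivative (so that f^{-1} is C^r as well, by the inverse function theorem). *)
Definition circle_Cr_diffeo (r : nat) (f : M -> M) : Prop :=
  (forall x y : M, f x = f y -> x = y) /\
  (forall y : M, exists x : M, f x = y) /\
  exists F : R -> R,
    (forall x : R, piM (F x) = f (piM x)) /\
    Cr r F /\
    (forall x : R, Derive F x <> 0).

Definition fom {Omega : Type} (f0 : M -> M) (eps : R) (kappa : Omega -> R)
  (w : Omega) (x : M) : M :=
  piM (proj1_sig (f0 x) + eps * kappa w).

Fixpoint fcomp {Omega : Type} (f0 : M -> M) (eps : R) (kappa : Omega -> R)
  (theta : Omega -> Omega) (n : nat) (w : Omega) (x : M) : M :=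
  match n with
  | O => x
  | S m => fcomp f0 eps kappa theta m (theta w) (fom f0 eps kappa w x)
  end.

Definition maxdev {Omega : Type} (kappa : Omega -> R) (theta : Omega -> Omega)
  (n : nat) (w w' : Omega) : R :=
  fold_right Rmax 0
    (map (fun j => Rabs (kappa (Nat.iter j theta w) - kappa w')) (seq 0 n)).

(* Main.v *)
Require Import Defs.
From Stdlib Require Import Reals.
From Stdlib Require Import Lra Lia List.
From Coquelicot Require Import Coquelicot.
Open Scope R_scope.

Lemma piM_id (y : R) : 0 <= y < 1 -> proj1_sig (piM y) = y.
Proof.
  intros Hy. simpl. destruct (base_Int_part y) as [H1 H2].
  assert (Hz : Int_part y = 0%Z).
  { assert (A : (Int_part y < 1)%Z) by (apply lt_IZR; lra).
    assert (B : (-1 < Int_part y)%Z) by (apply lt_IZR; simpl; lra). lia. }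
  rewrite Hz. simpl. lra.
Qed.

Lemma dM_le (x y : M) : dM x y <= Rabs (proj1_sig x - proj1_sig y).
Proof.
  unfold dM.
  set (E := fun t => exists k : Z, t = Rabs (proj1_sig x - proj1_sig y + IZR k)).
  destruct (Glb_Rbar_correct E) as [Hlb Hgr].
  assert (H1 : Rbar_le (Glb_Rbar E) (Rabs (proj1_sig x - proj1_sig y))).
  { apply Hlb. exists 0%Z. simpl. f_equal. ring. }
  assert (H2 : Rbar_le 0 (Glb_Rbar E)).
  { apply Hgr. intros t [k ->]. simpl. apply Rabs_pos. }
  destruct (Glb_Rbar E); simpl in *; try contradiction; try lra.
Qed.

Lemma fold_mono (l : list R) (a b : R) : a <= b -> fold_right Rmax a l <= fold_right Rmax b l.
Proof.
  induction l; simpl; intros; auto.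
  apply Rmax_le_compat; [lra| auto].
Qed.

Lemma fold_ge (l : list R) (a : R) : a <= fold_right Rmax a l.
Proof.
  induction l; simpl; [lra|]. eapply Rle_trans; [apply IHl| apply Rmax_r].
Qed.

Lemma maxdev_S {Omega : Type} (kappa : Omega -> R) theta n w w' :
  maxdev kappa theta n w w' <= maxdev kappa theta (S n) w w' /\
  Rabs (kappa (Nat.iter n theta w) - kappa w') <= maxdev kappa theta (S n) w w'.
Proof.
  unfold maxdev. rewrite seq_S, map_app, fold_right_app. simpl. split.
  - apply fold_mono. apply Rmax_r.
  - eapply Rle_trans; [|apply fold_ge]. apply Rmax_l.
Qed.

Lemma maxdev_ge0 {Omega : Type} (kappa : Omega -> R) theta n w w' :
  0 <= maxdev kappa theta n w w'.
Proof. apply fold_ge. Qed.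

Lemma iter_shift {A : Type} (f : A -> A) n a : Nat.iter n f (f a) = Nat.iter (S n) f a.
Proof. induction n; simpl; auto. rewrite IHn. reflexivity. Qed.

Lemma fcomp_S {Omega : Type} f0 eps (kappa : Omega -> R) theta n w x :
  fcomp f0 eps kappa theta (S n) w x =
  fom f0 eps kappa (Nat.iter n theta w) (fcomp f0 eps kappa theta n w x).
Proof.
  revert w x. induction n; intros w x; [reflexivity|].
  change (fcomp f0 eps kappa theta (S (S n)) w x) with
    (fcomp f0 eps kappa theta (S n) (theta w) (fom f0 eps kappa w x)).
  rewrite IHn, iter_shift. reflexivity.
Qed.

Theorem lemma2p1
  (r : nat) (hr : (1 <= r)%nat) (f0 : M -> M)
  (hf0 : circle_Cr_diffeo r f0)
  (hf0I : forall x : M, I0 x -> f0 x = piM (proj1_sig x / 2 + 1/4))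
  (Omega : Type) (theta : Omega -> Omega) (kappa : Omega -> R)
  (hkappa : forall w : Omega, -1 <= kappa w <= 1)
  (eps : R) (heps : 0 < eps < 1/8)
  (X : Omega -> M)
  (hX : forall w : Omega, I0 (X w) /\ fom f0 eps kappa w (X w) = X w)
  (hXuniq : forall (w : Omega) (y : M), I0 y -> fom f0 eps kappa w y = y -> y = X w) :
  forall (n : nat) (x : M) (w w' : Omega), I0 x ->
    dM (fcomp f0 eps kappa theta n w x) (X w')
      <= 1 / 2 ^ n + 6 * eps * maxdev kappa theta n w w'.
Proof.
  assert (Hstep : forall w x, I0 x ->
    proj1_sig (fom f0 eps kappa w x) = proj1_sig x / 2 + 1/4 + eps * kappa w
    /\ I0 (fom f0 eps kappa w x)).
  { intros w x Hx. unfold I0 in *. unfold fom. rewrite (hf0I x Hx).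
    rewrite (piM_id (proj1_sig x / 2 + 1/4)) by lra.
    specialize (hkappa w).
    assert (-eps <= eps * kappa w <= eps) by nra.
    rewrite piM_id by lra. split; [reflexivity| lra]. }
  intros n x w w' Hx.
  destruct (hX w') as [HXI HXf].
  set (c := proj1_sig (X w')).
  assert (Hc : c = c / 2 + 1/4 + eps * kappa w').
  { unfold c at 1. rewrite <- HXf. apply (Hstep w' (X w') HXI). }
  assert (Hmain : forall n, I0 (fcomp f0 eps kappa theta n w x) /\
     Rabs (proj1_sig (fcomp f0 eps kappa theta n w x) - c)
       <= Rabs (proj1_sig x - c) / 2 ^ n + 2 * eps * maxdev kappa theta n w w').
  { induction n0.
    - simpl. split; auto. unfold maxdev. simpl. lra.
    - destruct IHn0 as [HI Hb]. rewrite fcomp_S.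
      destruct (Hstep (Nat.iter n0 theta w) _ HI) as [Heq HI'].
      split; auto. rewrite Heq.
      destruct (maxdev_S kappa theta n0 w w') as [D1 D2].
      set (a := proj1_sig (fcomp f0 eps kappa theta n0 w x)) in *.
      set (k := kappa (Nat.iter n0 theta w)) in *.
      replace (a / 2 + 1 / 4 + eps * k - c) with ((a - c)/2 + eps * (k - kappa w')) by lra.
      eapply Rle_trans; [apply Rabs_triang|].
      rewrite Rabs_mult, (Rabs_pos_eq eps) by lra.
      unfold Rdiv. rewrite Rabs_mult, (Rabs_pos_eq (/2)) by lra.
      simpl pow. rewrite Rinv_mult.
      assert (0 <= maxdev kappa theta n0 w w') by apply maxdev_ge0.
      assert (eps * Rabs (k - kappa w') <= eps * maxdev kappa theta (S n0) w w')
        by (apply Rmult_le_compat_l; lra).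
      assert (eps * maxdev kappa theta n0 w w' <= eps * maxdev kappa theta (S n0) w w')
        by (apply Rmult_le_compat_l; lra).
      unfold Rdiv in Hb. nra. }
  destruct (Hmain n) as [_ Hb].
  eapply Rle_trans; [apply dM_le|]. fold c.
  assert (Rabs (proj1_sig x - c) <= 1/2).
  { unfold I0 in *. fold c in HXI. apply Rabs_le. lra. }
  assert (0 < 2 ^ n) by (apply pow_lt; lra).
  assert (Rabs (proj1_sig x - c) / 2 ^ n <= 1 / 2 ^ n).
  { unfold Rdiv. apply Rmult_le_compat_r; [left; apply Rinv_0_lt_compat; lra| lra]. }
  assert (0 <= maxdev kappa theta n w w') by apply maxdev_ge0.
  nra.
Qed.
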